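(* Let $k\in\mathbb{R}$ with $k\neq0$ and $|k|\neq1$, and let $g:\mathbb{R}^d\to\mathbb{R}^d$ be a homeomorphism topologically conjugate to the homothety $x\mapsto kx$. Then $g$ satisfies the topological shadowing property.
   Context: Let $(X,d)$ be a metric space and $f:X\to X$ a homeomorphism; $\mathcal{C}^+=\{\epsilon:X\to\mathbb{R}^+ : \epsilon \text{ continuous}\}$. For $\delta\in\mathcal{C}^+$, a sequence $\{x_n\}_{n\in\mathbb{Z}}\subset X$ is a $\delta$-pseudo-orbit of $f$ if $d(f(x_n),x_{n+1})<\delta(f(x_n))$ for every $n\in\mathbb{Z}$. For $\epsilon\in\mathcal{C}^+$, the sequence $\{x_n\}$ is $\epsilon$-shadowed by an orbit if there is $y\in X$ with $d(f^n(y),x_n)<\epsilon(x_n)$ for every $n\in\mathbb{Z}$. The homeomorphism $f$ satisfies the topological shadowing property if for every $\epsilon\in\mathcal{C}^+$ there exists $\delta\in\mathcal{C}^+$ such that every $\delta$-pseudo-orbit is $\epsilon$-shadowed by an orbit. $\mathbb{R}^d$ carries the Euclidean metric. *)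

(* Defs.v *)
From Stdlib Require Import Reals Lra ZArith.
Open Scope R_scope.

Definition continuous_map {X Y : Type} (dX : X -> X -> R) (dY : Y -> Y -> R)
  (f : X -> Y) : Prop :=
  forall x eps, 0 < eps -> exists delta, 0 < delta /\
    forall y, dX x y < delta -> dY (f x) (f y) < eps.

Definition homeomorphism {X : Type} (d : X -> X -> R) (f : X -> X) : Prop :=
  exists finv : X -> X,
    (forall x, finv (f x) = x) /\ (forall y, f (finv y) = y) /\
    continuous_map d d f /\ continuous_map d d finv.

Definition Cplus {X : Type} (d : X -> X -> R) (e : X -> R) : Prop :=
  continuous_map d (fun a b => Rabs (a - b)) e /\ forall x, 0 < e x.

Definition pseudo_orbit {X : Type} (d : X -> X -> R) (f : X -> X)
  (delta : X -> R) (xs : Z -> X) : Prop :=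
  forall n : Z, d (f (xs n)) (xs (n + 1)%Z) < delta (f (xs n)).

(** The full orbit (f^n y)_{n in Z} is encoded as a sequence
    ys with ys 0 = y and ys (n+1) = f (ys n); for a bijection f this is
    exactly n |-> f^n y. *)
Definition eps_shadowed {X : Type} (d : X -> X -> R) (f : X -> X)
  (eps : X -> R) (xs : Z -> X) : Prop :=
  exists ys : Z -> X,
    (forall n : Z, ys (n + 1)%Z = f (ys n)) /\
    (forall n : Z, d (ys n) (xs n) < eps (xs n)).

Definition topological_shadowing {X : Type} (d : X -> X -> R) (f : X -> X) : Prop :=
  forall eps, Cplus d eps ->
    exists delta, Cplus d delta /\
      forall xs : Z -> X, pseudo_orbit d f delta xs -> eps_shadowed d f eps xs.

(** Euclidean space R^d: real sequences vanishing from index d on. *)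
Definition Rd (d : nat) : Type := { x : nat -> R | forall i, (d <= i)%nat -> x i = 0 }.

Definition coord {d : nat} (x : Rd d) (i : nat) : R := proj1_sig x i.

Fixpoint sumsq (n : nat) (f : nat -> R) : R :=
  match n with
  | O => 0
  | S m => sumsq m f + f m ^ 2
  end.

Definition euclid_dist {d : nat} (x y : Rd d) : R :=
  sqrt (sumsq d (fun i => coord x i - coord y i)).

Definition Rd_scale {d : nat} (k : R) (x : Rd d) : Rd d.
Proof.
  exists (fun i => k * coord x i).
  intros i Hi. unfold coord. rewrite (proj2_sig x i Hi). ring.
Defined.

Definition top_conjugate {X : Type} (d : X -> X -> R) (g f : X -> X) : Prop :=
  exists h : X -> X, homeomorphism d h /\ forall x, h (g x) = f (h x).

(* Main.v *)
Require Import Defs.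
From Stdlib Require Import Reals Lra Lia ZArith FunctionalExtensionality ProofIrrelevance Classical.
From Coquelicot Require Import Coquelicot.
Open Scope R_scope.

Lemma Rd_ext d (x y : Rd d) : (forall i, coord x i = coord y i) -> x = y.
Proof.
  destruct x as [f Hf], y as [g Hg]; unfold coord; simpl; intros H.
  assert (f = g) by (apply functional_extensionality; auto). subst.
  f_equal. apply proof_irrelevance.
Qed.

Lemma coord_out d (x : Rd d) i : (d <= i)%nat -> coord x i = 0.
Proof. intros H; unfold coord; apply (proj2_sig x); auto. Qed.

Lemma sumsq_nonneg n f : 0 <= sumsq n f.
Proof. induction n; simpl; [lra| nra]. Qed.

Lemma sumsq_ext n f g : (forall i, (i < n)%nat -> f i = g i) -> sumsq n f = sumsq n g.
Proof.
  induction n; intros H; simpl; auto.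
  rewrite IHn by (intros; apply H; lia). rewrite H by lia. auto.
Qed.

Lemma sumsq_ext2 n f g : (forall i, (i < n)%nat -> f i ^2 = g i ^2) -> sumsq n f = sumsq n g.
Proof.
  induction n; intros H; cbn [sumsq]; auto.
  rewrite IHn by (intros; apply H; lia). rewrite (H n) by lia. auto.
Qed.

Lemma sq_le_of_abs a B : Rabs a <= B -> a^2 <= B^2.
Proof.
  intros H. assert (0 <= Rabs a) by apply Rabs_pos.
  rewrite <- pow2_abs. nra.
Qed.

Lemma le_of_sq Y X : 0 <= X -> Y^2 <= X^2 -> Y <= X.
Proof. intros H1 H2. destruct (Rle_dec Y X); auto. nra. Qed.

Lemma sumsq_le n f B : 0 <= B -> (forall i, (i < n)%nat -> Rabs (f i) <= B) ->
  sumsq n f <= INR n * B^2.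
Proof.
  intros HB; induction n; intros H; cbn [sumsq]; [simpl; lra|].
  rewrite S_INR.
  assert (f n ^2 <= B^2) by (apply sq_le_of_abs, H; lia).
  assert (sumsq n f <= INR n * B^2) by (apply IHn; intros; apply H; lia).
  lra.
Qed.

Lemma sumsq_term n f i : (i < n)%nat -> f i ^ 2 <= sumsq n f.
Proof.
  induction n; intros H; [lia|]. simpl.
  destruct (Nat.eq_dec i n).
  - subst. pose proof (sumsq_nonneg n f). lra.
  - pose proof (pow2_ge_0 (f n)). assert (f i ^2 <= sumsq n f) by (apply IHn; lia). lra.
Qed.

Fixpoint sumprod (n : nat) (f g : nat -> R) : R :=
  match n with O => 0 | S m => sumprod m f g + f m * g m end.

Lemma cauchy_schwarz n f g : (sumprod n f g)^2 <= sumsq n f * sumsq n g.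
Proof.
  induction n; simpl; [lra|].
  set (P := sumprod n f g) in *. set (U := sumsq n f) in *. set (V := sumsq n g) in *.
  assert (HU : 0 <= U) by apply sumsq_nonneg. assert (HV : 0 <= V) by apply sumsq_nonneg.
  set (a := f n). set (b := g n).
  assert (H2 : 2 * P * a * b <= U * b^2 + V * a^2).
  assert (0 <= U*b^2) by (apply Rmult_le_pos; [auto| apply pow2_ge_0]).
  assert (0 <= V*a^2) by (apply Rmult_le_pos; [auto| apply pow2_ge_0]).
  { apply le_of_sq. lra.
    assert (0 <= (U*b^2 - V*a^2)^2) by apply pow2_ge_0.
    assert ((2*P*a*b)^2 = 4 * P^2 * (a^2*b^2)) by ring.
    assert (P^2 * (a^2*b^2) <= U*V*(a^2*b^2)) by (apply Rmult_le_compat_r; nra).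
    nra. }
  nra.
Qed.

Lemma sumsq_add n f g :
  sumsq n (fun i => f i + g i) = sumsq n f + 2 * sumprod n f g + sumsq n g.
Proof. induction n; simpl; [lra|]. rewrite IHn. ring. Qed.

Lemma minkowski n f g :
  sqrt (sumsq n (fun i => f i + g i)) <= sqrt (sumsq n f) + sqrt (sumsq n g).
Proof.
  pose proof (sumsq_nonneg n f) as HU. pose proof (sumsq_nonneg n g) as HV.
  pose proof (sqrt_pos (sumsq n f)). pose proof (sqrt_pos (sumsq n g)).
  assert (HP : sumprod n f g <= sqrt (sumsq n f) * sqrt (sumsq n g)).
  { apply le_of_sq. nra. rewrite Rpow_mult_distr, !pow2_sqrt by auto. apply cauchy_schwarz. }
  rewrite <- (sqrt_pow2 (sqrt (sumsq n f) + sqrt (sumsq n g))) by lra.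
  apply sqrt_le_1_alt. rewrite sumsq_add.
  replace ((sqrt (sumsq n f) + sqrt (sumsq n g))^2) with
    (sqrt (sumsq n f)^2 + 2 * (sqrt (sumsq n f) * sqrt (sumsq n g)) + sqrt (sumsq n g)^2) by ring.
  rewrite !pow2_sqrt by auto. lra.
Qed.

Notation D := euclid_dist.

Lemma dist_nonneg d (x y : Rd d) : 0 <= D x y.
Proof. apply sqrt_pos. Qed.

Lemma dist_sym d (x y : Rd d) : D x y = D y x.
Proof. unfold euclid_dist. apply f_equal. apply sumsq_ext2. intros; cbv beta; ring. Qed.

Lemma sumsq_zero n f : (forall i, (i<n)%nat -> f i = 0) -> sumsq n f = 0.
Proof. induction n; intros H; simpl; auto. rewrite IHn by (intros; apply H; lia). rewrite H by lia. ring. Qed.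

Lemma dist_refl d (x : Rd d) : D x x = 0.
Proof. unfold euclid_dist. rewrite sumsq_zero; [apply sqrt_0|]. intros; cbv beta; ring. Qed.

Lemma dist_triangle d (x y z : Rd d) : D x z <= D x y + D y z.
Proof.
  unfold euclid_dist.
  rewrite (sumsq_ext d (fun i => coord x i - coord z i)
     (fun i => (coord x i - coord y i) + (coord y i - coord z i))) by (intros; cbv beta; ring).
  apply minkowski.
Qed.

Lemma coord_le_dist d (x y : Rd d) i : Rabs (coord x i - coord y i) <= D x y.
Proof.
  destruct (le_lt_dec d i).
  - rewrite !coord_out by auto. replace (0-0) with 0 by ring. rewrite Rabs_R0. apply dist_nonneg.
  - unfold euclid_dist. rewrite <- (sqrt_pow2 (Rabs (coord x i - coord y i))) by apply Rabs_pos. apply sqrt_le_1_alt.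
    rewrite pow2_abs. apply (sumsq_term d (fun i => coord x i - coord y i)); auto.
Qed.

Lemma dist_small d (x y : Rd d) e : 0 <= e ->
  (forall i, (i < d)%nat -> Rabs (coord x i - coord y i) <= e) -> D x y <= (INR d + 1) * e.
Proof.
  intros He H. unfold euclid_dist.
  pose proof (pos_INR d).
  rewrite <- (sqrt_pow2 ((INR d + 1)*e)) by nra.
  apply sqrt_le_1_alt.
  apply Rle_trans with (INR d * e^2). apply sumsq_le; auto.
  nra.
Qed.

Definition Rd0 d : Rd d := exist _ (fun _ => 0) (fun _ _ => eq_refl).
Definition nrm {d} (x : Rd d) := D x (Rd0 d).

Lemma coord_le_nrm d (x : Rd d) i : Rabs (coord x i) <= nrm x.
Proof. unfold nrm. pose proof (coord_le_dist d x (Rd0 d) i). unfold coord at 2 in H. simpl in H.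
  rewrite Rminus_0_r in H. auto. Qed.

Lemma nrm_le d (x y : Rd d) : nrm y <= nrm x + D x y.
Proof. unfold nrm. rewrite (dist_sym d x y). pose proof (dist_triangle d y x (Rd0 d)). lra. Qed.

Lemma cont_choice d (Q : Rd d -> R -> Prop) :
  (forall z r r', Q z r -> 0 < r' <= r -> Q z r') ->
  (forall z, exists s, 0 < s /\ forall z', D z z' < s -> Q z' s) ->
  exists rho, Defs.Cplus D rho /\ forall z, Q z (rho z).
Proof.
  intros Hdown Hloc.
  set (E := fun z t => exists w s, 0 < s /\ (forall z', D w z' < s -> Q z' s) /\
                                   t = Rmin 1 (s - D w z)).
  assert (Hb : forall z, bound (E z)).
  { intros z. exists 1. intros t (w & s & _ & _ & ->). apply Rmin_l. }
  assert (Hne : forall z, exists t, E z t).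
  { intros z. destruct (Hloc z) as (s & Hs & HQ). exists (Rmin 1 (s - D z z)).
    exists z, s. auto. }
  set (L := fun z => proj1_sig (completeness (E z) (Hb z) (Hne z))).
  assert (HL : forall z, is_lub (E z) (L z)) by (intros; apply (proj2_sig (completeness _ _ _))).
  assert (Lpos : forall z, 0 < L z).
  { intros z. destruct (Hloc z) as (s & Hs & HQ).
    apply Rlt_le_trans with (Rmin 1 (s - D z z)).
    - rewrite dist_refl. apply Rmin_glb_lt; lra.
    - apply (proj1 (HL z)). exists z, s. auto. }
  assert (Lip : forall z z', L z <= L z' + D z z').
  { intros z z'. apply (proj2 (HL z)). intros t (w & s & Hs & HQ & ->).
    assert (Rmin 1 (s - D w z') <= L z') by (apply (proj1 (HL z')); exists w, s; auto).
    pose proof (dist_triangle d w z z').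
    pose proof (dist_nonneg d z z').
    unfold Rmin in *. destruct (Rle_dec 1 (s - D w z)), (Rle_dec 1 (s - D w z')); lra. }
  exists (fun z => L z / 2). split; [split|].
  - intros x eps Heps. exists eps. split; auto. intros y Hy.
    pose proof (Lip x y). pose proof (Lip y x). rewrite (dist_sym d y x) in H0.
    apply Rabs_def1; lra.
  - intros z. pose proof (Lpos z). lra.
  - intros z. pose proof (Lpos z).
    destruct (classic (exists t, E z t /\ L z / 2 < t)) as [(t & (w & s & Hs & HQ & Ht) & Hlt)|Hno].
    + assert (D w z < s).
      { subst t. unfold Rmin in Hlt. destruct (Rle_dec 1 (s - D w z)); lra. }
      apply Hdown with s; auto.
      split; [lra|]. subst t. pose proof (Rmin_r 1 (s - D w z)). pose proof (dist_nonneg d w z). lra.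
    + exfalso. assert (L z <= L z / 2); [|lra].
      apply (proj2 (HL z)). intros t Ht. destruct (Rle_dec t (L z / 2)); auto.
      exfalso. apply Hno. exists t. split; auto. lra.
Qed.

Lemma var_mod d (phi : Rd d -> Rd d) (eta : Rd d -> R) :
  continuous_map D D phi -> Defs.Cplus D eta ->
  exists rho, Defs.Cplus D rho /\ forall u v, D u v < rho u -> D (phi u) (phi v) < eta (phi u).
Proof.
  intros Hphi [Heta Hpos].
  destruct (cont_choice d (fun u r => forall v, D u v < r -> D (phi u) (phi v) < eta (phi u)))
    as (rho & Hrho & HQ).
  - intros z r r' H Hr v Hv. apply H. lra.
  - intros u. set (e0 := eta (phi u)). assert (He0 : 0 < e0) by apply Hpos.
    destruct (Heta (phi u) (e0/2)) as (g & Hg & Hgam); [lra|].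
    destruct (Hphi u (Rmin g (e0/4))) as (t & Ht & Htt).
    { apply Rmin_glb_lt; lra. }
    exists (t/2). split; [lra|]. intros u' Hu' v Hv.
    assert (H1 : D (phi u) (phi u') < Rmin g (e0/4)) by (apply Htt; lra).
    assert (H2 : D (phi u) (phi v) < Rmin g (e0/4)).
    { apply Htt. pose proof (dist_triangle d u u' v). lra. }
    pose proof (Rmin_l g (e0/4)). pose proof (Rmin_r g (e0/4)).
    assert (H3 : Rabs (eta (phi u) - eta (phi u')) < e0/2) by (apply Hgam; lra).
    apply Rabs_def2 in H3.
    pose proof (dist_triangle d (phi u') (phi u) (phi v)). rewrite (dist_sym d (phi u') (phi u)) in H4.
    fold e0 in H3. lra.
  - exists rho. auto.
Qed.

Lemma conj_transfer d (g f h hinv : Rd d -> Rd d) :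
  (forall x, hinv (h x) = x) -> (forall y, h (hinv y) = y) ->
  continuous_map D D h -> continuous_map D D hinv ->
  (forall x, h (g x) = f (h x)) ->
  topological_shadowing D f -> topological_shadowing D g.
Proof.
  intros H1 H2 Hh Hhi Hc Hf eps Heps.
  destruct (var_mod d hinv eps Hhi Heps) as (epsf & Hepsf & Hm1).
  destruct (Hf epsf Hepsf) as (df & Hdf & Hsh).
  destruct (var_mod d h df Hh Hdf) as (dg & Hdg & Hm2).
  exists dg. split; auto. intros xs Hxs.
  destruct (Hsh (fun n => h (xs n))) as (ws & Hws1 & Hws2).
  - intros n. rewrite <- Hc. apply Hm2. apply Hxs.
  - exists (fun n => hinv (ws n)). split.
    + intros n. rewrite Hws1. rewrite <- (H2 (ws n)) at 1. rewrite <- Hc. apply H1.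
    + intros n. rewrite dist_sym. rewrite <- (H1 (xs n)) at 1 2. apply Hm1.
      rewrite dist_sym. apply Hws2.
Qed.


Lemma coord_scale d k (x : Rd d) i : coord (Rd_scale k x) i = k * coord x i.
Proof. reflexivity. Qed.

Lemma shadow_build d k (xs : Z -> Rd d) (s : Z -> nat -> R) (B : Z -> R) :
  (forall n i, (d <= i)%nat -> s n i = 0) ->
  (forall n i, s (n+1)%Z i = (coord (xs (n+1)%Z) i - k * coord (xs n) i) + k * s n i) ->
  (forall n i, Rabs (s n i) <= B n) ->
  exists ys : Z -> Rd d, (forall n, ys (n+1)%Z = Rd_scale k (ys n)) /\
    forall n, D (ys n) (xs n) <= (INR d + 1) * B n.
Proof.
  intros H0 Hsh Hb.
  assert (Hz : forall n i, (d <= i)%nat -> coord (xs n) i - s n i = 0).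
  { intros n i Hi. rewrite H0, coord_out by auto. ring. }
  exists (fun n => exist _ (fun i => coord (xs n) i - s n i) (Hz n)). split.
  - intros n. apply Rd_ext. intros i. rewrite coord_scale. unfold coord at 1 3. simpl.
    rewrite Hsh. ring.
  - intros n. apply dist_small.
    + apply Rle_trans with (Rabs (s n 0%nat)); [apply Rabs_pos|apply Hb].
    + intros i _. unfold coord at 1. simpl.
      replace (coord (xs n) i - s n i - coord (xs n) i) with (- s n i) by ring.
      rewrite Rabs_Ropp. apply Hb.
Qed.

Lemma series_bound (c : R) (u : nat -> R) (C : R) :
  Rabs c < 1 -> (forall j, Rabs (u j) <= C) ->
  ex_series (fun j => c^j * u j) /\ Rabs (Series (fun j => c^j * u j)) <= C / (1 - Rabs c).
Proof.
  intros Hc Hu.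
  assert (HC : 0 <= C) by (apply Rle_trans with (Rabs (u 0%nat)); [apply Rabs_pos|auto]).
  assert (Hg : is_series (fun j => C * Rabs c ^ j) (C * / (1 - Rabs c))).
  { assert (Hc' : Rabs (Rabs c) < 1) by (rewrite Rabs_Rabsolu; auto).
    exact (is_series_scal_l C _ _ (is_series_geom (Rabs c) Hc')). }
  assert (Hle : forall j, 0 <= Rabs (c^j * u j) <= C * Rabs c ^ j).
  { intros j. split; [apply Rabs_pos|]. rewrite Rabs_mult, <- RPow_abs.
    rewrite Rmult_comm. apply Rmult_le_compat_r; [apply pow_le, Rabs_pos| auto]. }
  assert (Hex : ex_series (fun j => Rabs (c^j * u j))).
  { apply (@ex_series_le R_AbsRing R_CompleteNormedModule _ (fun j => C * Rabs c ^ j)); [|eexists; eauto].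
    intros j. unfold norm; simpl. unfold abs; simpl. rewrite Rabs_Rabsolu. apply Hle. }
  split. apply ex_series_Rabs; auto.
  apply Rle_trans with (Series (fun j => Rabs (c^j * u j))). apply Series_Rabs; auto.
  apply Rle_trans with (Series (fun j => C * Rabs c ^ j)).
  apply Series_le; auto. eexists; eauto.
  rewrite (is_series_unique _ _ Hg). unfold Rdiv. lra.
Qed.

Definition CubeLB d := forall e : Rd d -> R, Defs.Cplus euclid_dist e -> forall r, exists c, 0 < c /\
  forall x, (forall i, Rabs (coord x i) <= r) -> c <= e x.

Lemma homothety_tsp d k : CubeLB d -> k <> 0 -> Rabs k <> 1 ->
  topological_shadowing (@euclid_dist d) (Rd_scale k).
Proof.
  intros HC Hk0 Hk1 eps Heps.
  set (a := Rabs k). assert (Ha : 0 < a) by (apply Rabs_pos_lt; auto).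
  set (Lam := Rabs (a - 1)).
  assert (HLam : 0 < Lam) by (apply Rabs_pos_lt; unfold a; lra).
  pose proof (pos_INR d) as Hd.
  set (kap := / (2 * (INR d + 1))).
  assert (Hkap : 0 < kap) by (apply Rinv_0_lt_compat; lra).
  destruct Heps as [Hepsc Hepsp].
  destruct (cont_choice d (fun z r => r <= Lam /\ forall x,
     (forall i, Rabs (coord x i) <= nrm z + 1) -> r <= Lam * kap * eps x)) as (del & Hdel & HQ).
  - intros z r r' [H1 H2] Hr. split; [lra|]. intros x Hx. specialize (H2 x Hx). lra.
  - intros z. destruct (HC eps (conj Hepsc Hepsp) (nrm z + 2)) as (c & Hc & Hcl).
    exists (Rmin Lam (Rmin 1 (Lam * kap * c))). split.
    { apply Rmin_glb_lt; auto. apply Rmin_glb_lt; [lra|]. apply Rmult_lt_0_compat; auto. apply Rmult_lt_0_compat; auto. }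
    intros z' Hz'. split; [apply Rmin_l|]. intros x Hx.
    pose proof (Rmin_l 1 (Lam * kap * c)). pose proof (Rmin_r 1 (Lam * kap * c)).
    pose proof (Rmin_r Lam (Rmin 1 (Lam * kap * c))).
    assert (c <= eps x).
    { apply Hcl. intros i. pose proof (nrm_le d z z'). specialize (Hx i). lra. }
    assert (Lam * kap * c <= Lam * kap * eps x).
    { apply Rmult_le_compat_l; auto. apply Rmult_le_pos; lra. }
    lra.
  - exists del. split; auto. intros xs Hxs.
    set (e := fun n i => coord (xs (n+1)%Z) i - k * coord (xs n) i).
    assert (He : forall n i, Rabs (e n i) < del (Rd_scale k (xs n))).
    { intros n i. unfold e. rewrite <- coord_scale. rewrite Rabs_minus_sym.
      eapply Rle_lt_trans; [apply coord_le_dist| apply Hxs]. }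
    assert (HeL : forall n i, Rabs (e n i) < Lam).
    { intros n i. pose proof (He n i). pose proof (proj1 (HQ (Rd_scale k (xs n)))). lra. }
    assert (Hgood : forall n m, (forall i, Rabs (coord (xs n) i) <= a * Rabs (coord (xs m) i) + 1) ->
               forall i, Rabs (e m i) <= Lam * kap * eps (xs n)).
    { intros n m Hg i. apply Rlt_le. eapply Rlt_le_trans; [apply He|]. apply (proj2 (HQ _)).
      intros i'. eapply Rle_trans; [apply Hg|]. unfold a. rewrite <- Rabs_mult, <- coord_scale.
      pose proof (coord_le_nrm d (Rd_scale k (xs m)) i'). lra. }
    assert (Hxe : forall n i, coord (xs (n+1)%Z) i = k * coord (xs n) i + e n i).
    { intros. unfold e. ring. }
    assert (Hfin : forall (s : Z -> nat -> R),
      (forall n i, (d <= i)%nat -> s n i = 0) ->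
      (forall n i, s (n+1)%Z i = e n i + k * s n i) ->
      (forall n i, Rabs (s n i) <= kap * eps (xs n)) -> eps_shadowed (@euclid_dist d) (Rd_scale k) eps xs).
    { intros s H0 Hsh Hb. destruct (shadow_build d k xs s (fun n => kap * eps (xs n)) H0) as (ys & Hy1 & Hy2).
      - intros n i. rewrite Hsh. unfold e. ring.
      - auto.
      - exists ys. split; auto. intros n. eapply Rle_lt_trans; [apply Hy2|].
        unfold kap. pose proof (Hepsp (xs n)).
        replace ((INR d + 1) * (/ (2 * (INR d + 1)) * eps (xs n))) with (eps (xs n) / 2) by (field; lra).
        lra. }
    assert (He0 : forall n i, (d <= i)%nat -> e n i = 0).
    { intros n i Hi. unfold e. rewrite !coord_out by auto. ring. }
    destruct (Rlt_le_dec 1 a) as [Hgt|Hle].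
    +
      assert (HLe : Lam = a - 1) by (unfold Lam; apply Rabs_pos_eq; lra).
      assert (Hgrow : forall n i j, Rabs (coord (xs n) i) <= Rabs (coord (xs (n + Z.of_nat j)%Z) i) + 1).
      { intros n i j. destruct (Rle_dec (Rabs (coord (xs n) i)) 1) as [Hs|Hs].
        { pose proof (Rabs_pos (coord (xs (n + Z.of_nat j)%Z) i)). lra. }
        assert (Hm : forall j, Rabs (coord (xs n) i) <= Rabs (coord (xs (n + Z.of_nat j)%Z) i)).
        { induction j0.
          - replace (n + Z.of_nat 0)%Z with n by lia. lra.
          - replace (n + Z.of_nat (S j0))%Z with ((n + Z.of_nat j0) + 1)%Z by lia.
            rewrite Hxe. set (p := (n + Z.of_nat j0)%Z) in *.
            set (xp := coord (xs p) i) in *.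
            pose proof (Rabs_triang (k * xp + e p i) (- e p i)) as Ht.
            replace (k * xp + e p i + - e p i) with (k * xp) in Ht by ring.
            rewrite Rabs_Ropp, Rabs_mult in Ht. fold a in Ht.
            pose proof (HeL p i).
            assert (0 <= (a - 1) * (Rabs xp - 1)) by (apply Rmult_le_pos; lra).
            lra. }
        pose proof (Hm j). lra. }
      assert (Hb : forall n j i, Rabs (e (n + Z.of_nat j)%Z i) <= Lam * kap * eps (xs n)).
      { intros n j. apply Hgood. intros i. pose proof (Hgrow n i j).
        pose proof (Rabs_pos (coord (xs (n + Z.of_nat j)%Z) i)).
        assert (Rabs (coord (xs (n + Z.of_nat j)%Z) i) <= a * Rabs (coord (xs (n + Z.of_nat j)%Z) i)) by nra.
        lra. }
      assert (Hc : Rabs (/ k) < 1).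
      { rewrite Rabs_inv. fold a. rewrite <- Rinv_1. apply Rinv_1_lt_contravar; lra. }
      assert (HS : forall n i, ex_series (fun j => (/ k)^j * e (n + Z.of_nat j)%Z i) /\ Rabs (Series (fun j => (/ k)^j * e (n + Z.of_nat j)%Z i)) <= Lam * kap * eps (xs n) / (1 - Rabs (/ k))).
      { intros n i. apply series_bound; auto. }
      apply (Hfin (fun n i => - (/ k * Series (fun j => (/ k)^j * e (n + Z.of_nat j)%Z i)))).
      * intros n i Hi.
        rewrite (Series_ext _ (fun j => 0 * (/ k)^j)) by (intros; rewrite He0 by auto; ring).
        rewrite Series_scal_l. ring.
      * intros n i. destruct (HS n i) as [Hex _].
        rewrite (Series_incr_1 _ Hex).
        rewrite (Series_ext (fun j => (/ k)^(S j) * e (n + Z.of_nat (S j))%Z i)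
                   (fun j => / k * ((/ k)^j * e (n + 1 + Z.of_nat j)%Z i))).
        2:{ intros j. replace (n + Z.of_nat (S j))%Z with (n + 1 + Z.of_nat j)%Z by lia. simpl. ring. }
        rewrite Series_scal_l. replace (n + Z.of_nat 0)%Z with n by lia. simpl. field. auto.
      * intros n i. destruct (HS n i) as [_ Hbd]. rewrite Rabs_Ropp, Rabs_mult.
        rewrite Rabs_inv in Hbd |- *. fold a in Hbd |- *.
        pose proof (Rabs_pos (Series (fun j => (/ k)^j * e (n + Z.of_nat j)%Z i))).
        assert (Hia : 0 < / a) by (apply Rinv_0_lt_compat; auto).
        apply Rle_trans with (/ a * (Lam * kap * eps (xs n) / (1 - / a))).
        { apply Rmult_le_compat_l; lra. }
        right. rewrite HLe. field. split; lra.

    +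
      assert (Hlt : a < 1) by (destruct Hle; auto; exfalso; apply Hk1; auto).
      assert (HLe : Lam = 1 - a) by (unfold Lam; rewrite Rabs_minus_sym; apply Rabs_pos_eq; lra).
      assert (Hshr : forall n i j, Rabs (coord (xs n) i) <= a * Rabs (coord (xs (n - 1 - Z.of_nat j)%Z) i) + 1).
      { intros n i j. set (m := (n - 1 - Z.of_nat j)%Z).
        set (M := Rmax (a * Rabs (coord (xs m) i) + Lam) 1).
        assert (HM1 : 1 <= M) by apply Rmax_r.
        assert (HMb : forall p, Rabs (coord (xs (p+1)%Z) i) <= a * Rabs (coord (xs p) i) + Lam).
        { intros p. rewrite Hxe. eapply Rle_trans; [apply Rabs_triang|]. rewrite Rabs_mult.
          fold a. pose proof (HeL p i). lra. }
        assert (Ht : forall t, Rabs (coord (xs (m + 1 + Z.of_nat t)%Z) i) <= M).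
        { induction t.
          - replace (m + 1 + Z.of_nat 0)%Z with (m + 1)%Z by lia.
            eapply Rle_trans; [apply HMb| apply Rmax_l].
          - replace (m + 1 + Z.of_nat (S t))%Z with ((m + 1 + Z.of_nat t) + 1)%Z by lia.
            eapply Rle_trans; [apply HMb|].
            assert (a * Rabs (coord (xs (m + 1 + Z.of_nat t)%Z) i) <= a * M) by (apply Rmult_le_compat_l; lra).
            assert (0 <= (1 - a) * (M - 1)) by (apply Rmult_le_pos; lra).
            lra. }
        specialize (Ht j). replace (m + 1 + Z.of_nat j)%Z with n in Ht by (unfold m; lia).
        assert (M <= a * Rabs (coord (xs m) i) + 1).
        { unfold M. pose proof (Rabs_pos (coord (xs m) i)).
          assert (0 <= a * Rabs (coord (xs m) i)) by (apply Rmult_le_pos; lra).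
          apply Rmax_lub; lra. }
        lra. }
      assert (Hb : forall n j i, Rabs (e (n - 1 - Z.of_nat j)%Z i) <= Lam * kap * eps (xs n)).
      { intros n j. apply Hgood. intros i. apply Hshr. }
      assert (HS : forall n i, ex_series (fun j => k^j * e (n - 1 - Z.of_nat j)%Z i) /\ Rabs (Series (fun j => k^j * e (n - 1 - Z.of_nat j)%Z i)) <= Lam * kap * eps (xs n) / (1 - Rabs k)).
      { intros n i. apply series_bound; auto. }
      apply (Hfin (fun n i => Series (fun j => k^j * e (n - 1 - Z.of_nat j)%Z i))).
      * intros n i Hi.
        rewrite (Series_ext _ (fun j => 0 * k^j)) by (intros; rewrite He0 by auto; ring).
        rewrite Series_scal_l. ring.
      * intros n i. destruct (HS (n+1)%Z i) as [Hex _].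
        rewrite (Series_incr_1 _ Hex).
        rewrite (Series_ext (fun j => k^(S j) * e (n + 1 - 1 - Z.of_nat (S j))%Z i)
                   (fun j => k * (k^j * e (n - 1 - Z.of_nat j)%Z i))).
        2:{ intros j. replace (n + 1 - 1 - Z.of_nat (S j))%Z with (n - 1 - Z.of_nat j)%Z by lia. simpl. ring. }
        rewrite Series_scal_l. replace (n + 1 - 1 - Z.of_nat 0)%Z with n by lia. simpl. ring.
      * intros n i. destruct (HS n i) as [_ Hbd]. fold a in Hbd.
        eapply Rle_trans; [apply Hbd|]. right. rewrite HLe. field. lra.
Qed.

Module MC.
From mathcomp Require Import all_boot all_order all_algebra.
From mathcomp Require Import all_classical all_reals all_analysis.
From mathcomp Require Import Rstruct Rstruct_topology.
Import Order.TTheory GRing.Theory Num.Theory.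
Local Open Scope classical_set_scope.
Local Open Scope ring_scope.

Definition fromrV {d} (v : 'rV[R]_d) : Rd d.
Proof.
  exists (fun i => match (insub i : option 'I_d) with Some j => v ord0 j | None => 0 end).
  move=> i /ssrnat.leP Hi. by rewrite insubF // ltnNge Hi.
Defined.

Lemma coord_fromrV d (v : 'rV[R]_d) (j : 'I_d) : Defs.coord (fromrV v) j = v ord0 j.
Proof. by rewrite /Defs.coord /= valK. Qed.

Lemma fromrV_row d (x : Rd d) : fromrV (\row_(j < d) Defs.coord x j) = x.
Proof.
  apply: Rd_ext => i. rewrite /Defs.coord /=.
  case: insubP => [j _ <-|Hi]; first by rewrite mxE.
  symmetry; apply: coord_out. apply/ssrnat.leP. by rewrite leqNgt.
Qed.

Lemma cube_lb d (e : Rd d -> R) : Defs.Cplus D e -> forall r, exists c, (0 < c)%coqR /\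
  forall x, (forall i, (Rabs (Defs.coord x i) <= r)%coqR) -> (c <= e x)%coqR.
Proof.
  move=> [Hc Hpos] r.
  pose F := fun v : 'rV[R]_d => (e (fromrV v))^-1.
  pose A := [set v : 'rV[R]_d | forall i, `[-r, r]%classic (v ord0 i)].
  have cA : compact A := @rV_compact R d (fun _ => `[-r, r]%classic) (fun _ => @segment_compact R (- r) r).
  have cont_e : forall v, (fun t => e (fromrV t)) @ v --> e (fromrV v).
  { move=> v. apply/(@cvgrPdist_lt _ R^o _ _ (nbhs_filter v)) => eps /RltP eps0.
    have [del [del0 Hdel]] := Hc (fromrV v) eps eps0.
    pose eta := (del / (2 * (INR d + 1)))%coqR.
    have eta0 : Rlt 0 eta.
    { rewrite /eta. have := pos_INR d. move=> ?. apply: Rdiv_lt_0_compat => //. lra. }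
    have Hn : nbhs v (fun t : 'rV[R]_d => forall j : 'I_d, `|v ord0 j - t ord0 j| < eta).
    { apply/nbhs_ballP; exists eta; first by apply/RltP.
      move=> t [_ H] j. exact: (H ord0 j). }
    apply: filterS Hn => t Ht. rewrite -RabsE. apply/RltP. apply: Hdel.
    apply: (Rle_lt_trans _ ((INR d + 1) * eta)%coqR).
    - apply: dist_small; first lra.
      move=> i /ssrnat.ltP Hi. have := @coord_fromrV d v (Ordinal Hi). have := @coord_fromrV d t (Ordinal Hi).
      rewrite /= => -> ->. rewrite RabsE. apply/RleP. exact: (ltW (Ht _)).
    - rewrite /eta. have := pos_INR d => ?. have -> : ((INR d + 1) * (del / (2 * (INR d + 1))) = del / 2)%coqR by field; lra. lra. }
  have cont_F : continuous F.
  { move=> v. apply: (cvgV _ (cont_e v)). apply/eqP => H. have := Hpos (fromrV v).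
    rewrite H. exact: Rlt_irrefl. }
  have cFA := continuous_compact (continuous_subspaceT cont_F) cA.
  have bFA := @compact_bounded R R^o _ cFA.
  have [M0 [_ HM]] := bFA.
  have HM1 : forall y, (F @` A) y -> `|y| <= `|M0| + 1.
  { apply: HM. apply: (le_lt_trans (ler_norm M0)). by rewrite ltrDl ltr01. }
  have M0p : (0 < `|M0| + 1)%R by apply: (lt_le_trans ltr01); rewrite lerDr normr_ge0.
  move/RltP: M0p => M0p.
  exists (Rinv (`|M0| + 1)). split; first by apply: Rinv_0_lt_compat.
  move=> x Hx.
  have Hv : A (\row_j Defs.coord x j).
  { move=> i. rewrite /= mxE in_itv /= -ler_norml -RabsE. apply/RleP. exact: Hx. }
  have H1 := HM1 _ (imageP F Hv).
  rewrite /F fromrV_row in H1. move/RleP: H1. rewrite -RabsE => H1.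
  have ex0 := Hpos x.
  rewrite Rabs_pos_eq in H1; last by apply: Rlt_le; apply: Rinv_0_lt_compat.
  rewrite -(Rinv_inv (e x)). apply: Rinv_le_contravar => //. by apply: Rinv_0_lt_compat.
Qed.
End MC.

Theorem mainTheorem7 (d : nat) (k : R) (g : Rd d -> Rd d) :
  k <> 0 -> Rabs k <> 1 ->
  homeomorphism euclid_dist g ->
  top_conjugate euclid_dist g (Rd_scale k) ->
  topological_shadowing euclid_dist g.
Proof.
  intros Hk0 Hk1 _ (h & (hinv & H1 & H2 & Hh & Hhi) & Hc).
  apply (conj_transfer d g (Rd_scale k) h hinv H1 H2 Hh Hhi Hc).
  apply homothety_tsp; auto.
  intros e He r. apply (MC.cube_lb d e He r).
Qed.
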